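(* The category $\mathbb{O}$ is small and has pullbacks.
   Context: Fix a set $Act$ of action labels. An $Act$-labelled poset is $O=(X_O,\preccurlyeq_O,l_O)$ with $\preccurlyeq_O$ a partial order on the set $X_O$ and $l_O\colon X_O\to Act$. A morphism $O\to O'$ is a map $X_O\to X_{O'}$ that preserves order and labels; it is an order-embedding if moreover $\sigma(x)\preccurlyeq_{O'}\sigma(y)$ implies $x\preccurlyeq_O y$. $\mathcal{O}$ is the skeletal category of the category of finite $Act$-labelled posets and their morphisms (one chosen object per isomorphism class), and $\mathbb{O}$ is the subcategory of $\mathcal{O}$ with the same objects whose morphisms are the order-embeddings. *)

(* Defs.v *)
From mathcomp Require Import all_boot.
Set Implicit Arguments. Unset Strict Implicit. Unset Printing Implicit Defensive.

(* A finite Act-labelled poset, with carrier represented as 'I_n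
   (every finite labelled poset is isomorphic to one of this form). *)
Record lposet (Act : Type) := LPoset {
  lp_n : nat;
  lp_le : rel 'I_lp_n;
  lp_lab : 'I_lp_n -> Act;
  lp_refl : reflexive lp_le;
  lp_anti : antisymmetric lp_le;
  lp_trans : transitive lp_le }.

Section Defs.
Variable Act : Type.
Implicit Types O P Q : lposet Act.

Definition is_mor O O' (f : 'I_(lp_n O) -> 'I_(lp_n O')) : Prop :=
  (forall x y, lp_le x y -> lp_le (f x) (f y)) /\
  (forall x, lp_lab (f x) = lp_lab x).

(* order-embeddings: the morphisms of the category 𝕆 *)
Definition is_emb O O' (f : 'I_(lp_n O) -> 'I_(lp_n O')) : Prop :=
  is_mor f /\ (forall x y, lp_le (f x) (f y) -> lp_le x y).

Definition lp_iso O O' : Prop :=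
  exists (f : 'I_(lp_n O) -> 'I_(lp_n O')) (g : 'I_(lp_n O') -> 'I_(lp_n O)),
    [/\ is_mor f, is_mor g, cancel f g & cancel g f].

(* S selects exactly one object in each isomorphism class:
   the objects of the skeletal categories 𝒪 and 𝕆. *)
Definition skeleton (S : lposet Act -> Prop) : Prop :=
  (forall O, exists2 O', S O' & lp_iso O O') /\
  (forall O1 O2, S O1 -> S O2 -> lp_iso O1 O2 -> O1 = O2).

(* 𝕆 is small: its objects are encoded injectively in a set built from nat
   and Act, and each hom-set embeds in a finite set of functions. *)
Definition O_small (S : lposet Act -> Prop) : Prop :=
  (exists enc : {O | S O} -> {n : nat & (rel 'I_n * ('I_n -> Act))%type},
      injective enc) /\
  (forall O O', exists enc : {f : 'I_(lp_n O) -> 'I_(lp_n O') | is_emb f} ->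
                            {ffun 'I_(lp_n O) -> 'I_(lp_n O')}, injective enc).

(* 𝕆 has pullbacks (morphisms are compared as maps, i.e. pointwise). *)
Definition O_has_pullbacks (S : lposet Act -> Prop) : Prop :=
  forall A B C, S A -> S B -> S C ->
  forall (f : 'I_(lp_n A) -> 'I_(lp_n C)) (g : 'I_(lp_n B) -> 'I_(lp_n C)),
    is_emb f -> is_emb g ->
    exists P (p1 : 'I_(lp_n P) -> 'I_(lp_n A)) (p2 : 'I_(lp_n P) -> 'I_(lp_n B)),
      [/\ S P, is_emb p1, is_emb p2, f \o p1 =1 g \o p2 &
        forall Q (q1 : 'I_(lp_n Q) -> 'I_(lp_n A)) (q2 : 'I_(lp_n Q) -> 'I_(lp_n B)),
          S Q -> is_emb q1 -> is_emb q2 -> f \o q1 =1 g \o q2 ->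
          exists u : 'I_(lp_n Q) -> 'I_(lp_n P),
            [/\ is_emb u, p1 \o u =1 q1, p2 \o u =1 q2 &
              forall u' : 'I_(lp_n Q) -> 'I_(lp_n P),
                is_emb u' -> p1 \o u' =1 q1 -> p2 \o u' =1 q2 -> u' =1 u]].

End Defs.

(* Main.v *)
Require Import Defs.
From mathcomp Require Import all_boot.
From Stdlib Require Import FunctionalExtensionality ProofIrrelevance Eqdep_dec.
Set Implicit Arguments. Unset Strict Implicit. Unset Printing Implicit Defensive.

Lemma emb_inj Act (O O' : lposet Act) (f : 'I_(lp_n O) -> 'I_(lp_n O')) :
  is_emb f -> injective f.
Proof.
move=> [_ H] x y e; apply: lp_anti; apply/andP; split; apply: H; rewrite e; apply: lp_refl.
Qed.

Lemma emb_comp Act (O1 O2 O3 : lposet Act) (f : 'I_(lp_n O1) -> 'I_(lp_n O2))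
  (g : 'I_(lp_n O2) -> 'I_(lp_n O3)) : is_emb f -> is_emb g -> @is_emb _ O1 O3 (g \o f).
Proof.
move=> [[f1 f2] f3] [[g1 g2] g3]; split; [split|] => /=.
- by move=> x y /f1 /g1.
- by move=> x; rewrite g2 f2.
- by move=> x y /g3 /f3.
Qed.

Lemma iso_emb Act (O O' : lposet Act) (h : 'I_(lp_n O) -> 'I_(lp_n O'))
  (h' : 'I_(lp_n O') -> 'I_(lp_n O)) : is_mor h -> is_mor h' -> cancel h h' -> is_emb h.
Proof.
move=> Hh [Hh' _] K; split => // x y /Hh'; by rewrite !K.
Qed.

Lemma pb0 Act (A B C : lposet Act) (f : 'I_(lp_n A) -> 'I_(lp_n C))
  (g : 'I_(lp_n B) -> 'I_(lp_n C)) : is_emb f -> is_emb g ->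
  exists (P : lposet Act) (p1 : 'I_(lp_n P) -> 'I_(lp_n A)) (p2 : 'I_(lp_n P) -> 'I_(lp_n B)),
   [/\ is_emb p1, is_emb p2, f \o p1 =1 g \o p2 &
    forall (Q : lposet Act) (q1 : 'I_(lp_n Q) -> 'I_(lp_n A)) (q2 : 'I_(lp_n Q) -> 'I_(lp_n B)),
      is_emb q1 -> is_emb q2 -> f \o q1 =1 g \o q2 ->
      exists u : 'I_(lp_n Q) -> 'I_(lp_n P),
        [/\ is_emb u, p1 \o u =1 q1, p2 \o u =1 q2 &
          forall u' : 'I_(lp_n Q) -> 'I_(lp_n P),
            p1 \o u' =1 q1 -> p2 \o u' =1 q2 -> u' =1 u]].
Proof.
move=> ef eg.
have ginj := emb_inj eg.
move: (ef) (eg) => [[f1 f2] f3] [[g1 g2] g3].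
pose T : finType := {x : 'I_(lp_n A) * 'I_(lp_n B) | f x.1 == g x.2}.
pose k := #|T|.
pose e : 'I_k -> T := enum_val.
pose r : T -> 'I_k := enum_rank.
have eK : cancel e r by move=> i; rewrite /e /r enum_valK.
have rK : cancel r e by move=> t; rewrite /e /r enum_rankK.
pose le0 : rel 'I_k := fun i j => lp_le (val (e i)).1 (val (e j)).1.
have refl0 : reflexive le0 by move=> i; apply: lp_refl.
have trans0 : transitive le0 by move=> i j l; apply: lp_trans.
have anti0 : antisymmetric le0.
  move=> i j /lp_anti H.
  rewrite -(eK i) -(eK j); congr r; apply: val_inj.
  have Hi := valP (e i); have Hj := valP (e j).
  move: Hi Hj; case: (val (e i)) H => a b; case: (val (e j)) => a' b' /= H.
  rewrite H => /eqP -> /eqP /ginj ->; done.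
pose P0 := @LPoset Act k le0 (fun i => lp_lab (val (e i)).1) refl0 anti0 trans0.
pose p1 : 'I_(lp_n P0) -> 'I_(lp_n A) := fun i => (val (e i)).1.
pose p2 : 'I_(lp_n P0) -> 'I_(lp_n B) := fun i => (val (e i)).2.
have comm : forall i, f (p1 i) = g (p2 i) by move=> i; apply/eqP; exact: valP (e i).
exists P0, p1, p2; split.
- by split; [split|] => //.
- split; [split|] => /=.
  + move=> x y H; apply: g3; rewrite -!comm; exact: f1.
  + by move=> x; rewrite -g2 -comm f2.
  + move=> x y H; apply: f3; rewrite !comm; exact: g1.
- exact: comm.
move=> Q q1 q2 eq1 eq2 cq.
have Hq : forall x, f (q1 x) == g (q2 x) by move=> x; apply/eqP; exact: cq.
pose u x : 'I_(lp_n P0) := r (exist _ (q1 x, q2 x) (Hq x)).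
have pu1 : forall x, p1 (u x) = q1 x by move=> x; rewrite /p1 /u rK.
have pu2 : forall x, p2 (u x) = q2 x by move=> x; rewrite /p2 /u rK.
exists u; split => //.
- move: eq1 => [[h1 h2] h3]; split; [split|] => /=.
  + by move=> x y H; rewrite /le0 -/(p1 _) -/(p1 _) !pu1; apply: h1.
  + by move=> x; rewrite -/(p1 _) pu1 h2.
  + by move=> x y; rewrite /le0 -/(p1 _) -/(p1 _) !pu1; apply: h3.
- move=> u' H1 H2 x; rewrite -(eK (u' x)) /u; congr r; apply: val_inj => /=.
  move: (H1 x) (H2 x) => /= <- <-; rewrite /p1 /p2; exact: surjective_pairing.
Qed.

Theorem proposition6 (Act : Type) (S : lposet Act -> Prop) :
  skeleton S -> O_small S /\ O_has_pullbacks S.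
Proof.
move=> [Sex Suniq]; split.
- split.
  + exists (fun O : {O | S O} =>
      existT (fun n => (rel 'I_n * ('I_n -> Act))%type) (lp_n (proj1_sig O))
             (@lp_le Act (proj1_sig O), @lp_lab Act (proj1_sig O))).
    move=> [O1 s1] [O2 s2] /= H.
    suff E : O1 = O2 by subst; rewrite (proof_irrelevance _ s1 s2).
    apply: Suniq => //.
    destruct O1, O2; simpl in H.
    have en := f_equal (@projT1 _ _) H; simpl in en; subst.
    apply inj_pair2_eq_dec in H; last by move=> a b; case: (a =P b); [left|right].
    case: H => E1 E2; subst.
    by exists id, id; split.
  + move=> O O'; exists (fun f => finfun (proj1_sig f)).
    move=> [f1 e1] [f2 e2] /= H.
    have E : f1 = f2.
      apply: functional_extensionality => x.
      by move/ffunP: H => /(_ x); rewrite !ffunE.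
    subst; congr exist; exact: proof_irrelevance.
- move=> A B C _ _ _ f g ef eg.
  have [P0 [p1 [p2 [e1 e2 c U]]]] := pb0 ef eg.
  have [P SP [h [h' [mh mh' K1 K2]]]] := Sex P0.
  have eh := iso_emb mh mh' K1.
  have eh' := iso_emb mh' mh K2.
  exists P, (p1 \o h'), (p2 \o h'); split => //.
  + exact: emb_comp.
  + exact: emb_comp.
  + by move=> x /=; apply: c.
  + move=> Q q1 q2 _ eq1 eq2 cq.
    have [u [eu pu1 pu2 uu]] := U Q q1 q2 eq1 eq2 cq.
    exists (h \o u); split.
    * exact: emb_comp.
    * by move=> x /=; rewrite K1; apply: pu1.
    * by move=> x /=; rewrite K1; apply: pu2.
    * move=> u' _ H1 H2 x /=.
      by rewrite -(uu (h' \o u') (fun y => H1 y) (fun y => H2 y) x) /= K2.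
Qed.
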